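(* Let $q$ be a prime power and $n\ge2$. For $1\le d\le\lfloor n/2\rfloor$ let $\mathcal{M}_{q,d}$ be the largest size of a $d$-intersecting family in $\mathbb{G}_q(n,2d)$, and let $\mathcal{M}_q=\max_{1\le d\le\lfloor n/2\rfloor}\mathcal{M}_{q,d}$. If $\mathcal{U}\subseteq\mathbb{P}_q(n)$ is an equidistant linear code with constant distance $2d$, then $|\mathcal{U}|\le 2^{\lfloor\log_2(\mathcal{M}_{q,d}+1)\rfloor}$. In general, every equidistant linear code $\mathcal{U}\subseteq\mathbb{P}_q(n)$ satisfies $|\mathcal{U}|\le 2^{\lfloor\log_2(\mathcal{M}_q+1)\rfloor}$.
   Context: $\mathbb{P}_q(n)$ denotes the set of all subspaces of $\mathbb{F}_q^n$ and $\mathbb{G}_q(n,k)$ the set of $k$-dimensional subspaces. For subspaces $X,Y$ the subspace distance is $d_S(X,Y)=\dim X+\dim Y-2\dim(X\cap Y)$. A linear code in $\mathbb{P}_q(n)$ is a subset $\mathcal{U}\subseteq\mathbb{P}_q(n)$ with $\{0\}\in\mathcal{U}$ for which there exists a map $\boxplus:\mathcal{U}\times\mathcal{U}\to\mathcal{U}$ such that (i) $(\mathcal{U},\boxplus)$ is an abelian group; (ii) its identity element is $\{0\}$; (iii) $X\boxplus X=\{0\}$ for all $X\in\mathcal{U}$; (iv) $d_S(Y_1\boxplus X,Y_2\boxplus X)=d_S(Y_1,Y_2)$ for all $Y_1,Y_2,X\in\mathcal{U}$. It is equidistant with constant distance $r$ if $d_S(X,Y)=r$ for all distinct $X,Y\in\mathcal{U}$.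 A family $\mathcal{F}$ of subspaces is $\lambda$-intersecting if $\dim(X\cap Y)=\lambda$ for all distinct $X,Y\in\mathcal{F}$. *)

(* Defs.v *)
From HB Require Import structures.
From mathcomp Require Import all_boot all_order all_algebra all_field.
Set Implicit Arguments. Unset Strict Implicit. Unset Printing Implicit Defensive.
Import VectorInternalTheory.

HB.instance Definition _ (F : finFieldType) (vT : vectType F) :=
  [Finite of {vspace vT} by <:].

(* P_q(n): the subspaces of F^n, where F is a finite field with q elements. *)
Definition subsp (F : finFieldType) (n : nat) := {vspace 'rV[F]_n}.

Section Defs.
Variables (F : finFieldType) (n : nat).
Local Notation S := (subsp F n).

Definition dS (X Y : S) : nat := (\dim X + \dim Y - 2 * \dim (X :&: Y))%N.

Definition grass (k : nat) : {set S} := [set X : S | \dim X == k].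

Definition linear_code (U : {set S}) : Prop :=
  (0%VS : S) \in U /\
  exists op : S -> S -> S,
    (forall X Y, X \in U -> Y \in U -> op X Y \in U) /\
    (forall X Y Z, X \in U -> Y \in U -> Z \in U ->
       op X (op Y Z) = op (op X Y) Z) /\
    (forall X Y, X \in U -> Y \in U -> op X Y = op Y X) /\
    (forall X, X \in U -> op 0%VS X = X /\ op X 0%VS = X) /\
    (forall X, X \in U -> exists Y, Y \in U /\ op X Y = 0%VS /\ op Y X = 0%VS) /\
    (forall X, X \in U -> op X X = 0%VS) /\
    (forall Y1 Y2 X, Y1 \in U -> Y2 \in U -> X \in U ->
       dS (op Y1 X) (op Y2 X) = dS Y1 Y2).

Definition equidistant (U : {set S}) (r : nat) : Prop :=
  forall X Y, X \in U -> Y \in U -> X != Y -> dS X Y = r.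

Definition intersecting (Fam : {set S}) (lam : nat) : bool :=
  [forall X in Fam, forall Y in Fam, (X != Y) ==> (\dim (X :&: Y) == lam)].

Definition Mqd (d : nat) : nat :=
  \max_(Fam : {set S} | (Fam \subset grass (2 * d)) && intersecting Fam d) #|Fam|.

Definition Mq : nat := \max_(d < n./2.+1 | (0 < d)%N) Mqd d.
End Defs.

(* Main.v *)
Require Import Defs.
From HB Require Import structures.
From mathcomp Require Import all_boot all_order all_algebra all_field.
From mathcomp Require Import zify.

Section Pow2.
Variables (T : finType) (U : {set T}) (e : T) (op : T -> T -> T).
Hypotheses (cl : forall x y, x \in U -> y \in U -> op x y \in U)
  (asc : forall x y z, x \in U -> y \in U -> z \in U -> op x (op y z) = op (op x y) z)
  (cm : forall x y, x \in U -> y \in U -> op x y = op y x)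
  (id0 : forall x, x \in U -> op e x = x)
  (nil2 : forall x, x \in U -> op x x = e)
  (eU : e \in U).

Lemma pow2_aux m (S : {set T}) : (#|U| - #|S| <= m)%N -> S \subset U ->
  (forall x y, x \in S -> y \in S -> op x y \in S) ->
  (exists j, #|S| = 2 ^ j) -> exists k, #|U| = 2 ^ k.
Proof.
elim: m S => [|m IH] S hm sSU clS [j hj].
  have: U \subset S.
    apply/subsetP=> x xU; apply/negPn/negP=> xS.
    have : (#|S| < #|U|)%N.
      apply: proper_card; rewrite properE sSU /=; apply/subsetPn; by exists x.
    lia.
  move=> sUS; exists j; by rewrite -hj (eqP (_ : U == S)) // eqEsubset sUS sSU.
case: (boolP (U \subset S)) => [sUS|/subsetPn [a aU aS]].
  exists j; by rewrite -hj (eqP (_ : U == S)) // eqEsubset sUS sSU.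
have SU x : x \in S -> x \in U by move=> xS; exact: (subsetP sSU).
have canc x : x \in U -> op (op x a) a = x.
  move=> xU; by rewrite -asc // nil2 // cm // id0.
set I := [set op x a | x in S].
have cI : #|I| = #|S|.
  apply: card_in_imset => x y xS yS hxy.
  by rewrite -(canc x (SU x xS)) hxy canc // SU.
have dis : [disjoint S & I].
  apply/pred0P => y /=; apply/negP => /andP [yS /imsetP [x xS hy]].
  apply: (negP aS).
  have -> : a = op x y by rewrite hy (@asc x x a (SU x xS) (SU x xS) aU) (nil2 x (SU x xS)) (id0 a aU).
  exact: clS.
have sub : S :|: I \subset U.
  apply/subsetP=> z; rewrite inE => /orP [/SU //|/imsetP [x xS ->]]; exact: cl (SU x xS) aU.
have e0 : S :&: I = set0.
  exact: disjoint_setI0.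
have cSI : #|S :|: I| = (#|S| + #|S|)%N by rewrite cardsU e0 cards0 subn0 cI.
apply: (IH (S :|: I)).
- have := subset_leq_card sub. rewrite cSI.
  have : (0 < #|S|)%N by rewrite hj expn_gt0.
  lia.
- exact: sub.
- move=> x y; rewrite !inE => /orP [xS|/imsetP [x' x'S ->]] /orP [yS|/imsetP [y' y'S ->]].
  + by rewrite clS.
  + apply/orP; right; apply/imsetP; exists (op x y'); first exact: clS.
    exact: (asc x y' a (SU x xS) (SU y' y'S) aU).
  + apply/orP; right; apply/imsetP; exists (op x' y); first exact: clS.
    have x'U := SU x' x'S; have yU := SU y yS.
    rewrite (cm (op x' a) y) ?cl // (asc y x' a) // (cm y x') //.
  + apply/orP; left.
    have x'U := SU x' x'S; have y'U := SU y' y'S.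
    have -> : op (op x' a) (op y' a) = op x' y'.
      rewrite -(asc x' a (op y' a)) ?cl // (cm y' a) // (asc a a y') // nil2 // id0 //.
    exact: clS.
- by exists j.+1; rewrite cSI hj expnS mul2n addnn.
Qed.
End Pow2.

Lemma pow_bound (u M : nat) : (exists k, u = 2 ^ k) -> (u <= M + 1)%N ->
  (u <= 2 ^ trunc_log 2 (M + 1))%N.
Proof.
move=> [k ->] h; rewrite leq_exp2l //; exact: trunc_log_max.
Qed.

Section Main.
Variables (F : finFieldType) (n : nat).
Local Notation S := (subsp F n).

Lemma dS0 (X : S) : dS 0%VS X = \dim X.
Proof. by rewrite /dS cap0v dimv0 muln0 subn0 add0n. Qed.

Lemma dimcap (X Y : S) : (\dim (X :&: Y) <= \dim X)%N.
Proof. apply: dimvS; exact: capvSl. Qed.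

Lemma dimcap2 (X Y : S) : (\dim (X :&: Y) <= \dim Y)%N.
Proof. apply: dimvS; exact: capvSr. Qed.

Lemma boundA (U : {set S}) d : (0%VS : S) \in U -> equidistant U (2 * d) ->
  (#|U| <= Mqd F n d + 1)%N.
Proof.
move=> U0 heq.
have dimX X : X \in U :\ 0%VS -> \dim X = (2 * d)%N.
  rewrite !inE => /andP [hX XU]; rewrite -dS0; apply: heq => //; by rewrite eq_sym.
have : (#|U :\ 0%VS| <= Mqd F n d)%N.
  rewrite /Mqd; apply: (leq_bigmax_cond (F := fun Fam : {set S} => #|Fam|)).
  apply/andP; split.
    apply/subsetP => X hX; rewrite inE; apply/eqP; exact: dimX.
  apply/forallP => X; apply/implyP => hX; apply/forallP => Y; apply/implyP => hY.
  apply/implyP => hXY.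
  have dXd := dimX X hX; have dYd := dimX Y hY.
  move: hX hY; rewrite !inE => /andP [_ XU] /andP [_ YU].
  have := heq X Y XU YU hXY; rewrite /dS dXd dYd.
  have := dimcap X Y; rewrite dXd => h1 h2; apply/eqP; lia.
by rewrite (cardsD1 0%VS U) U0 /= addnC leq_add2r.
Qed.

Lemma exists_dim2 : (2 <= n)%N -> exists W : S, \dim W = 2%N.
Proof.
move=> hn.
set X := vbasis (fullv : S).
have fX : free X := basis_free (vbasisP _).
have fT : free (take 2 X).
  apply: (@catl_free _ _ (drop 2 X)); by rewrite cat_take_drop.
exists <<take 2 X>>%VS.
move/eqP: fT => ->; rewrite size_take size_tuple dimvf dim_matrix /= GRing.mul1r.
case: ifP => // /negbT; rewrite -leqNgt => h; apply/eqP; by rewrite eqn_leq h hn.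
Qed.
End Main.

Theorem corollary2 (F : finFieldType) (n : nat) (hn : (2 <= n)%N)
    (U : {set subsp F n}) (hU : linear_code U) :
  (forall d : nat, (1 <= d <= n./2)%N -> equidistant U (2 * d) ->
     (#|U| <= 2 ^ trunc_log 2 (Mqd F n d + 1))%N) /\
  ((exists r : nat, equidistant U r) ->
     (#|U| <= 2 ^ trunc_log 2 (Mq F n + 1))%N).
Proof.
have hU' := hU.
move: hU' => [U0 [op [hcl [hasc [hcm [hid [_ [hnil hdist]]]]]]]].
have id0 : forall x, x \in U -> op 0%VS x = x by move=> x /hid [].
have p2 : exists k, #|U| = 2 ^ k.
  apply: (@pow2_aux _ U 0%VS op hcl hasc hcm id0 hnil U0 #|U| [set 0%VS]).
  - exact: leq_subr.
  - by rewrite sub1set.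
  - move=> x y; rewrite !inE => /eqP -> /eqP ->; by rewrite hnil.
  - by exists 0%N; rewrite cards1.
have MqGe d : (1 <= d <= n./2)%N -> (Mqd F n d <= Mq F n)%N.
  move=> /andP [h1 h2].
  have hd : (d < n./2.+1)%N by [].
  exact: (leq_bigmax_cond (P := fun i : 'I_n./2.+1 => (0 < i)%N)
           (F := fun i : 'I_n./2.+1 => Mqd F n i) (Ordinal hd)).
split.
  move=> d hd heq; apply: pow_bound => //; exact: boundA.
move=> [r heq].
case: (leqP #|U| 2) => hc.
  have [W hW] := exists_dim2 F n hn.
  have h1 : (1 <= Mqd F n 1)%N.
    rewrite /Mqd; apply: (@leq_trans #|[set W]|); first by rewrite cards1.
    apply: (leq_bigmax_cond (F := fun Fam : {set subsp F n} => #|Fam|)).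
    apply/andP; split.
      by rewrite sub1set inE hW.
    apply/forallP => X; apply/implyP; rewrite inE => /eqP ->.
    apply/forallP => Y; apply/implyP; rewrite inE => /eqP ->.
    by rewrite eqxx.
  have h2 : (1 <= Mq F n)%N.
    apply: leq_trans h1 _; apply: MqGe; apply/andP; split => //.
    by case: (n) hn => [|[|m]].
  apply: (leq_trans hc); rewrite -[X in (X <= _)%N]/(2 ^ 1)%N leq_exp2l //.
  apply: trunc_log_max => //; lia.
have : (1 < #|U :\ 0%VS|)%N.
  by rewrite (cardsD1 0%VS U) U0 /= add1n ltnS in hc.
move/card_gt1P => [X [Y [hX hY hXY]]].
move: hX hY; rewrite !inE => /andP [X0 XU] /andP [Y0 YU].
have dX : \dim X = r by rewrite -dS0; apply: heq; rewrite // eq_sym.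
have dY : \dim Y = r by rewrite -dS0; apply: heq; rewrite // eq_sym.
have := heq X Y XU YU hXY; rewrite /dS dX dY.
have := dimcap F n X Y; rewrite dX.
set c := \dim (X :&: Y) => hc1 hr.
have rc : r = (2 * c)%N by lia.
have Xpos : (0 < \dim X)%N by rewrite lt0n dimv_eq0.
have Xle : (\dim X <= n)%N.
  have := dimvS (subvf X); by rewrite dimvf dim_matrix /= GRing.mul1r.
have hcd : (1 <= c <= n./2)%N.
  apply/andP; split; first lia.
  rewrite -(half_double c) ; apply: half_leq; rewrite -mul2n; lia.
rewrite rc in heq.
apply: pow_bound => //.
apply: (leq_trans (@boundA F n U c U0 heq)); rewrite leq_add2r; exact: MqGe.
Qed.
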